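(* Let $S$ be a set of $k$ vertices carrying a $d$-regular bipartite graph with adjacency matrix $A|_{S\times S}$, where $d=\gamma pk$, $\gamma\ge1/2$ and $p\ge5\left(\frac{\log k}{\gamma^4k}\right)^{1/6}$. Let $\tau\ge d/2$, let $\mathbf v^{(1)},\dots,\mathbf v^{(L)}$ ($L=L_{-\tau}\ge1$) be orthonormal eigenvectors of $A|_{S\times S}$ spanning the eigenspaces with eigenvalue $\le-\tau$, and let $\mathbf w^{(i)}$, $i\in S$, be the spectral embedding vectors. Let $N\subseteq S$ be a random subset containing each $i\in S$ independently with probability $p$ (e.g. $N=N(j)\cap S$ for fixed $j\in V\setminus S$). Then for an arbitrary unit vector $\mathbf y\in\mathbb R^L$, with probability at least $1-O(1/k^4)$, $$\sum_{i\in N}\langle\mathbf y,\mathbf w^{(i)}\rangle^2\ge \frac p2.$$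
   Context: Spectral embedding: let $W$ be the $L\times k$ matrix whose rows are $\mathbf v^{(1)},\dots,\mathbf v^{(L)}$ (indexed by $S$); for $i\in S$, $\mathbf w^{(i)}\in\mathbb R^L$ is the $i$-th column of $W$, i.e. $w^{(i)}_r=v^{(r)}_i$. *)

(* Defs.v *)
From HB Require Import structures.
From mathcomp Require Import all_boot all_order all_algebra.
From mathcomp Require Import reals exp.
Set Implicit Arguments. Unset Strict Implicit. Unset Printing Implicit Defensive.
Import Order.TTheory GRing.Theory Num.Theory.
Local Open Scope ring_scope.

Definition simple_graph (k : nat) (e : rel 'I_k) : Prop :=
  (forall i, ~~ e i i) /\ (forall i j, e i j = e j i).

Definition bipartite (k : nat) (e : rel 'I_k) : Prop :=
  exists side : 'I_k -> bool, forall i j, e i j -> side i != side j.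

Definition regular (k : nat) (e : rel 'I_k) (d : nat) : Prop :=
  forall i, #|[set j | e i j]| = d.

Definition adjmx (R : pzRingType) (k : nat) (e : rel 'I_k) : 'M[R]_k :=
  \matrix_(i, j) (e i j)%:R.

(* V : 'M_(L,k) has rows v^(1),...,v^(L): orthonormal eigenvectors of A
   spanning (the sum of) the eigenspaces of A with eigenvalue <= -tau. *)
Definition neg_spectral_basis (R : realFieldType) (k L : nat)
    (A : 'M[R]_k) (tau : R) (V : 'M[R]_(L, k)) : Prop :=
  [/\ V *m V^T = 1%:M,
      (forall r : 'I_L, exists2 lam : R, lam <= - tau &
          row r V *m A = lam *: row r V)
    & (forall (x : 'rV[R]_k) (lam : R), lam <= - tau ->
          x *m A = lam *: x -> (x <= V)%MS)].

(* Spectral embedding: w^(i) is the i-th column of V; inner product <y, w^(i)>. *)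
Definition wdot (R : pzRingType) (k L : nat) (V : 'M[R]_(L, k))
    (y : 'rV[R]_L) (i : 'I_k) : R :=
  \sum_(r < L) y 0 r * V r i.

(* Probability of an event E for the random subset N of 'I_k which contains
   each element independently with probability p. *)
Definition subset_prob (R : pzRingType) (k : nat) (p : R)
    (E : pred {set 'I_k}) : R :=
  \sum_(N : {set 'I_k} | E N) p ^+ #|N| * (1 - p) ^+ (k - #|N|).

(* Main.v *)
Require Import Defs.
From HB Require Import structures.
From mathcomp Require Import all_boot all_order all_algebra.
From mathcomp Require Import reals exp.
From mathcomp Require Import sequences ring lra.
Import Order.TTheory GRing.Theory Num.Theory.
Local Open Scope ring_scope.

Section S1.
Variable R : realType.

Lemma gen_fun (k : nat) (p : R) (f : 'I_k -> R) :
  \sum_(N : {set 'I_k}) p ^+ #|N| * (1 - p) ^+ (k - #|N|) * \prod_(i in N) f i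
  = \prod_i (1 - p + p * f i).
Proof.
under [RHS]eq_bigr do rewrite addrC.
rewrite bigA_distr.
apply: eq_bigr => N _.
rewrite [RHS](bigID (mem N)) /=.
rewrite [in RHS](eq_bigr (fun i => p * f i)); last by move=> i ->.
rewrite [in RHS](eq_bigr (fun _ => 1 - p) (P := fun i => i \notin N)); last by move=> i /negbTE ->.
rewrite big_split /= prodr_const.
have -> : \prod_(i | i \notin N) (1 - p) = (1 - p) ^+ (k - #|N|).
  rewrite (eq_bigl (fun i => i \in ~: N)); last by move=> i; rewrite in_setC.
  rewrite prodr_const cardsCs card_ord setCK.
  done.
rewrite mulrAC -!mulrA; congr (_ * _); rewrite mulrC //.
Qed.

Lemma total_prob k (p : R) : \sum_(N : {set 'I_k}) p ^+ #|N| * (1 - p) ^+ (k - #|N|) = 1.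
Proof.
have := gen_fun k p (fun _ => 1).
rewrite (eq_bigr (fun N : {set 'I_k} => p ^+ #|N| * (1 - p) ^+ (k - #|N|))).
  move=> ->; apply: big1 => i _; rewrite mulr1 subrK //.
by move=> N _; rewrite prodr_const expr1n mulr1.
Qed.

Lemma prob_compl k (p : R) (E : pred {set 'I_k}) :
  subset_prob p E = 1 - subset_prob p (predC E).
Proof.
rewrite /subset_prob; have := total_prob k p; rewrite (bigID E) /=; lra.
Qed.

Lemma expN_le (x : R) : 0 <= x -> x <= 3^-1 -> expR (- x) <= 1 - 4^-1 * 3 * x.
Proof.
move=> x0 x1.
have h : 1 <= (1 - 4^-1 * 3 * x) * (1 + x) by nra.
rewrite expRN -[_^-1]mul1r ler_pdivrMr ?expR_gt0 //.
apply: (le_trans h); apply: ler_wpM2l; first lra.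
exact: expR_ge1Dx.
Qed.

Lemma chernoff k (p M : R) (X : 'I_k -> R) : 0 <= p <= 1 -> 0 < M ->
  (forall i, 0 <= X i <= M) -> \sum_i X i = 1 ->
  subset_prob p (fun N => ~~ (p / 2 <= \sum_(i in N) X i)) <= expR (- (p / (12 * M))).
Proof.
move=> /andP[p0 p1] M0 HX HS.
set t := (3 * M)^-1.
have t0 : 0 < t by rewrite invr_gt0; lra.
have w0 (N : {set 'I_k}) : 0 <= p ^+ #|N| * (1 - p) ^+ (k - #|N|).
  by apply: mulr_ge0; apply: exprn_ge0; lra.
rewrite /subset_prob.
apply: (le_trans (y := \sum_(N : {set 'I_k}) p ^+ #|N| * (1 - p) ^+ (k - #|N|) *
   (expR (t * p / 2) * \prod_(i in N) expR (- (t * X i))))).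
  rewrite [X in _ <= X](bigID (fun N : {set 'I_k} => ~~ (p / 2 <= \sum_(i in N) X i))) /=.
  apply: ler_wpDr.
    apply: sumr_ge0 => N _; apply: mulr_ge0 => //; apply: mulr_ge0; first exact: expR_ge0.
    by apply: prodr_ge0 => i _; exact: expR_ge0.
  apply: ler_sum => N HN; apply: ler_peMr => //.
  rewrite -expR_sum -expRD sumrN -mulr_sumr.
  rewrite -ltNge in HN.
  have : 0 <= t * p / 2 - t * \sum_(i in N) X i.
    rewrite -mulrA -mulrBr; apply: mulr_ge0; lra.
  move=> h; apply: le_trans (expR_ge1Dx _); lra.
under eq_bigr do rewrite mulrCA.
rewrite -mulr_sumr gen_fun.
apply: (le_trans (y := expR (t * p / 2) * \prod_i expR (- (4^-1 * 3 * p * t * X i)))).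
  apply: ler_wpM2l; first exact: expR_ge0.
  apply: ler_prod => i _; have /andP[Xi0 XiM] := HX i.
  have tX0 : 0 <= t * X i by apply: mulr_ge0; lra.
  have tX1 : t * X i <= 3^-1.
    rewrite /t; have -> : (3 ^-1 : R) = (3 * M)^-1 * M by field; rewrite gt_eqF.
    by apply: ler_wpM2l => //; exact: ltW.
  have := expN_le (t * X i) tX0 tX1 => h.
  apply/andP; split.
    have := expR_ge0 (- (t * X i)); nra.
  apply: le_trans (expR_ge1Dx _); nra.
rewrite -expR_sum -expRD.
rewrite sumrN -mulr_sumr HS mulr1 ler_expR.
rewrite /t; have -> : (3 * M)^-1 = 3^-1 * M^-1 by rewrite invfM.
have -> : (12 * M)^-1 = 12^-1 * M^-1 by rewrite invfM.
have Mi : 0 < M^-1 by rewrite invr_gt0.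
nra.
Qed.
End S1.

Set Implicit Arguments. Unset Strict Implicit.

Section S2.
Variable R : realType.

Lemma ortho k L (V : 'M[R]_(L, k)) : V *m V^T = 1%:M ->
  forall r s, \sum_j V r j * V s j = (r == s)%:R.
Proof.
move=> H r s; have := congr1 (fun M : 'M[R]_L => M r s) H; rewrite !mxE => <-.
by apply: eq_bigr => j _; rewrite mxE.
Qed.

Lemma norm_comb k L (V : 'M[R]_(L, k)) (a : 'I_L -> R) : V *m V^T = 1%:M ->
  \sum_j (\sum_r a r * V r j) ^+ 2 = \sum_r a r ^+ 2.
Proof.
move=> H.
transitivity (\sum_j \sum_r \sum_s a r * a s * (V r j * V s j)).
  apply: eq_bigr => j _; rewrite expr2 mulr_suml; apply: eq_bigr => r _.
  rewrite mulr_sumr; apply: eq_bigr => s _; ring.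
rewrite exchange_big; apply: eq_bigr => r _.
rewrite exchange_big /=.
rewrite (eq_bigr (fun s => a r * a s * (r == s)%:R)); last first.
  by move=> s _; rewrite -mulr_sumr ortho.
rewrite (bigD1 r) //= eqxx mulr1 big1 ?addr0 ?expr2 //.
by move=> s /negbTE; rewrite eq_sym => ->; rewrite mulr0.
Qed.

Lemma cs_sum k (P : pred 'I_k) (z : 'I_k -> R) :
  (\sum_(j | P j) z j) ^+ 2 <= #|P|%:R * \sum_(j | P j) z j ^+ 2.
Proof.
have -> : (\sum_(j | P j) z j) ^+ 2 = \sum_(a | P a) \sum_(b | P b) z a * z b.
  by rewrite expr2 mulr_suml; apply: eq_bigr => a _; rewrite mulr_sumr.
have -> : #|P|%:R * \sum_(j | P j) z j ^+ 2 =
   \sum_(a | P a) \sum_(b | P b) (z a ^+ 2 + z b ^+ 2) / 2.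
  transitivity (\sum_(a | P a) (#|P|%:R * (z a ^+ 2 / 2) + (\sum_(b | P b) z b ^+ 2) / 2)).
    rewrite big_split /= -mulr_sumr -mulr_suml sumr_const -[(_ / 2) *+ _]mulr_natl.
    by rewrite -mulrDr -splitr.
  apply: eq_bigr => a _.
  rewrite [in RHS](eq_bigr (fun b => z a ^+ 2 / 2 + z b ^+ 2 / 2)); last by move=> b _; rewrite mulrDl.
  rewrite big_split /= sumr_const -mulr_suml.
  by rewrite mulr_natl.
apply: ler_sum => a _; apply: ler_sum => b _.
have := sqr_ge0 (z a - z b); lra.
Qed.

Lemma deloc k (e : rel 'I_k) (d : nat) (tau : R) L (V : 'M[R]_(L, k)) (y : 'rV[R]_L) :
  (forall i j, e i j = e j i) -> regular e d -> (0 < d)%N -> d%:R / 2 <= tau ->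
  neg_spectral_basis (adjmx R e) tau V -> \sum_r y 0 r ^+ 2 = 1 ->
  (forall i, wdot V y i ^+ 2 <= 4 / d%:R) /\ \sum_i wdot V y i ^+ 2 = 1.
Proof.
move=> esym reg d0 htau [HV Heig _] Hy.
split; last by rewrite -Hy -(norm_comb (fun r => y 0 r) HV).
pose lam r := \sum_j (\sum_l V r l * (e l j)%:R) * V r j.
have eig r : (lam r <= - tau) /\ forall j, \sum_l V r l * (e l j)%:R = lam r * V r j.
  have [lam' hl heq] := Heig r.
  have E j : \sum_l V r l * (e l j)%:R = lam' * V r j.
    have := congr1 (fun M : 'rV[R]_k => M 0 j) heq; rewrite !mxE => <-.
    by apply: eq_bigr => l _; rewrite !mxE.
  have -> : lam r = lam'.
    rewrite /lam (eq_bigr (fun j => lam' * (V r j * V r j))); last by move=> j _; rewrite E mulrA.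
    by rewrite -mulr_sumr (ortho HV) eqxx mulr1.
  by split => // j; rewrite E.
have dpos : 0 < d%:R :> R by rewrite ltr0n.
set D := d%:R / 2 : R.
have D0 : 0 < D by rewrite /D; lra.
have lamneg r : lam r <= - D by have := (eig r).1; rewrite /D; lra.
have lam0 r : lam r != 0 by apply: ltr0_neq0; have := lamneg r; lra.
pose z j := \sum_r (y 0 r / lam r) * V r j.
have hz i : wdot V y i = \sum_(j | e i j) z j.
  rewrite big_mkcond /=.
  transitivity (\sum_j z j * (e j i)%:R); last first.
    by apply: eq_bigr => j _; rewrite (esym j i); case: (e i j); rewrite ?mulr1 ?mulr0.
  rewrite /z /wdot; symmetry.
  under eq_bigr do rewrite mulr_suml.
  rewrite exchange_big; apply: eq_bigr => r _ /=.
  under eq_bigr do rewrite -mulrA.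
  by rewrite -mulr_sumr (eig r).2 mulrA divfK.
have hzz : \sum_j z j ^+ 2 <= (D^-1) ^+ 2.
  rewrite /z (norm_comb (fun r => y 0 r / lam r) HV).
  apply: (le_trans (y := \sum_r y 0 r ^+ 2 * (D^-1) ^+ 2)).
    apply: ler_sum => r _; rewrite exprMn; apply: ler_wpM2l; first exact: sqr_ge0.
    have h1 : 0 < (- lam r)^-1 by rewrite invr_gt0; have := lamneg r; lra.
    have h2 : (- lam r)^-1 <= D^-1 by rewrite lef_pV2 ?posrE //; have := lamneg r; lra.
    by rewrite -sqrrN -invrN; nra.
  by rewrite -mulr_suml Hy mul1r.
move=> i; rewrite hz.
apply: le_trans (cs_sum _ _) _.
have cP : #|(fun j => e i j)| = d.
  by rewrite -(reg i) cardsE.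
rewrite cP.
apply: (le_trans (y := d%:R * (D^-1) ^+ 2)).
  apply: ler_wpM2l; first exact: ltW.
  apply: le_trans hzz.
  rewrite [X in _ <= X](bigID (fun j => e i j)) /= lerDl.
  by apply: sumr_ge0 => j _; exact: sqr_ge0.
rewrite /D le_eqVlt; apply/orP; left; apply/eqP; field.
by rewrite gt_eqF.
Qed.
End S2.

Unset Implicit Arguments.

Theorem lemma2p12 (R : realType) :
  exists C : R,
  forall (k : nat) (e : rel 'I_k) (d : nat) (gamma p tau : R) (L : nat)
         (V : 'M[R]_(L, k)) (y : 'rV[R]_L),
    simple_graph e -> bipartite e -> regular e d ->
    d%:R = gamma * p * k%:R ->
    1 / 2 <= gamma ->
    0 <= p <= 1 ->
    5 * powR (ln k%:R / (gamma ^+ 4 * k%:R)) (6%:R^-1) <= p ->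
    d%:R / 2 <= tau ->
    (1 <= L)%N ->
    neg_spectral_basis (adjmx R e) tau V ->
    \sum_(r < L) y 0 r ^+ 2 = 1 ->
    1 - C / k%:R ^+ 4 <=
      subset_prob p (fun N => p / 2 <= \sum_(i in N) wdot V y i ^+ 2).
Proof.
exists 1 => k e d gamma p tau L V y [_ esym] _ reg Hd Hg /andP[p0 p1] Hpow Htau HL HB Hy.
have HB' := HB; case: HB' => [HV _ _].
have w0 (N : {set 'I_k}) : 0 <= p ^+ #|N| * (1 - p) ^+ (k - #|N|).
  by apply: mulr_ge0; apply: exprn_ge0; lra.
case: k e esym reg Hd Hpow V HB HV y Hy w0 => [|k] e esym reg Hd Hpow V HB HV y Hy w0.
  have := ortho HV (Ordinal HL) (Ordinal HL).
  by rewrite big_ord0 eqxx => /eqP; rewrite eq_sym oner_eq0.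
case: k e esym reg Hd Hpow V HB HV y Hy w0 => [|k] e esym reg Hd Hpow V HB HV y Hy w0.
  rewrite expr1n divr1 subrr; apply: sumr_ge0 => N _; exact: w0.
set n := k.+2.
have k1 : 1 < n%:R :> R by rewrite ltr1n.
have kpos : 0 < n%:R :> R by lra.
have lnk : 0 < ln n%:R := ln_gt0 k1.
set x := ln n%:R / (gamma ^+ 4 * n%:R).
have g0 : 0 < gamma by lra.
have g4 : 0 < gamma ^+ 4 by rewrite exprn_gt0.
have x0 : 0 <= x by rewrite /x; apply: divr_ge0; [lra | apply: mulr_ge0; lra].
set q := powR x 6%:R^-1 in Hpow.
have hq6 : q ^+ 6 = x.
  rewrite /q -powR_mulrn ?powR_ge0 // -powRrM mulVf ?powRr1 //.
  by rewrite pnatr_eq0.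
have hp6 : 5 ^+ 6 * x <= p ^+ 6.
  rewrite -hq6 -exprMn; apply: lerXn2r => //; rewrite nnegrE //.
  by apply: mulr_ge0 => //; exact: powR_ge0.
have dk : (d <= n)%N.
  by rewrite -(reg ord0); apply: leq_trans (max_card _) _; rewrite card_ord.
have gp1 : gamma * p <= 1.
  have : d%:R <= n%:R :> R by rewrite ler_nat.
  rewrite Hd -[X in _ <= X]mul1r ler_pM2r //.
have gp0 : 0 <= gamma * p by apply: mulr_ge0; lra.
have key : 5 ^+ 6 * ln n%:R <= p ^+ 2 * n%:R.
  have -> : 5 ^+ 6 * ln n%:R = (5 ^+ 6 * x) * (gamma ^+ 4 * n%:R).
    rewrite /x; field; apply/andP; split; [by rewrite gt_eqF | by rewrite gt_eqF].
  apply: (le_trans (y := p ^+ 6 * (gamma ^+ 4 * n%:R))).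
    by apply: ler_wpM2r => //; apply: mulr_ge0; lra.
  have -> : p ^+ 6 * (gamma ^+ 4 * n%:R) = (gamma * p) ^+ 4 * (p ^+ 2 * n%:R) by ring.
  apply: ler_piMl; first by apply: mulr_ge0; [exact: sqr_ge0 | lra].
  exact: exprn_ile1.
have h56 : 384 <= 5 ^+ 6 :> R by rewrite -natrX ler_nat.
have l56 : 0 < 5 ^+ 6 * ln n%:R :> R.
  by rewrite mulr_gt0 // exprn_gt0.
have ppos : 0 < p.
  rewrite lt_neqAle p0 andbT; apply/eqP => hp; move: key; rewrite -hp.
  rewrite expr0n /= mul0r; lra.
have dpos : (0 < d)%N by rewrite -(ltr0n R) Hd; apply: mulr_gt0 => //; apply: mulr_gt0.
have [Hmax Hsum] := deloc esym reg dpos Htau HB Hy.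
have dR : 0 < d%:R :> R by rewrite ltr0n.
have M0 : 0 < 4 / d%:R :> R by apply: divr_gt0.
have HX i : 0 <= wdot V y i ^+ 2 <= 4 / d%:R by rewrite sqr_ge0 Hmax.
have := chernoff R n p (4 / d%:R) (fun i => wdot V y i ^+ 2) (introT andP (conj p0 p1)) M0 HX Hsum.
move=> hch.
rewrite prob_compl mul1r lerD2l lerN2.
apply: le_trans hch _.
have -> : (n%:R ^+ 4)^-1 = expR (- (4%:R * ln n%:R)) :> R.
  by rewrite expRN expRM_natl lnK // posrE.
rewrite ler_expR lerN2.
have -> : p / (12 * (4 / d%:R)) = p * d%:R / 48.
  by field; rewrite gt_eqF.
have hpd : p * d%:R = gamma * (p ^+ 2 * n%:R) by rewrite Hd /n; ring.
rewrite hpd.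
have : 0 <= p ^+ 2 * n%:R by apply: mulr_ge0; [exact: sqr_ge0 | lra].
nra.
Qed.
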